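(* Let $E$ be a finite ground set and let $\mathcal{F}\subseteq 2^E$ be a non-empty downward-closed family of feasible solutions, with unit weights (so the value of a set is its cardinality). Consider the robust counterpart $$\max_{S\in\mathcal{F}}\ \min_{f\in E\cup\{\emptyset\}}\ \max_{\substack{e\in (E\setminus(S\cup\{f\}))\cup\{\emptyset\}\\ (S\setminus\{f\})\cup\{e\}\in\mathcal{F}}} |(S\setminus\{f\})\cup\{e\}|.$$ Then there is a maximum-cardinality set $S\in\mathcal{F}$ that is an optimal first-stage solution of this robust counterpart. Furthermore, if some maximum-cardinality set $S\in\mathcal{F}$ is repairable, then $S$ is an optimal first-stage solution.
   Context: Downward-closed means: if $X\in\mathcal{F}$ and $X'\subseteq X$ then $X'\in\mathcal{F}$. In the robust counterpart, choosing $f=\emptyset$ means no element is deleted and choosing $e=\emptyset$ means no element is added. A set $S\in\mathcal{F}$ is called repairable if for every $f\in S$ there exists $e\in E\setminus S$ such that $(S\setminus\{f\})\cup\{e\}\in\mathcal{F}$. *)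

(* Defs.v *)
From mathcomp Require Import all_boot.
Set Implicit Arguments. Unset Strict Implicit. Unset Printing Implicit Defensive.

Section Robust.
Variable T : finType.
Implicit Types (F : {set {set T}}) (S : {set T}).

Definition down_closed F : Prop :=
  forall X X' : {set T}, X \in F -> X' \subset X -> X' \in F.

(* None plays the role of the empty choice "emptyset". *)
Definition del S (f : option T) : {set T} :=
  if f is Some x then S :\ x else S.
Definition add S (e : option T) : {set T} :=
  if e is Some x then x |: S else S.

Definition admissible F S (f e : option T) : bool :=
  (if e is Some x then (x \notin S) && (f != Some x) else true)
  && (add (del S f) e \in F).

Definition repair_value F S (f : option T) : nat :=
  \max_(e : option T | admissible F S f e) #|add (del S f) e|.

(* min over deletions f in E u {emptyset}; #|T|.+1 is a neutral upper bound. *)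
Definition robust_value F S : nat :=
  \big[minn/#|T|.+1]_(f : option T) repair_value F S f.

Definition optimal_first_stage F S : Prop :=
  S \in F /\ forall S', S' \in F -> robust_value F S' <= robust_value F S.

Definition is_max_card F S : Prop :=
  S \in F /\ forall S', S' \in F -> #|S'| <= #|S|.

Definition repairable F S : Prop :=
  S \in F /\ forall f, f \in S -> exists2 e, e \in ~: S & (S :\ f) :|: [set e] \in F.

End Robust.

(* Main.v *)
Require Import Defs.
From mathcomp Require Import all_boot.
From mathcomp Require Import zify.
From Stdlib Require Import Classical.
Set Implicit Arguments. Unset Strict Implicit.

Section H.
Variable T : finType.
Implicit Types (F : {set {set T}}) (S : {set T}).

Lemma rv_le F S f k : (forall e, admissible F S f e -> #|add (del S f) e| <= k) ->
  repair_value F S f <= k.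
Proof. by move=> H; apply/bigmax_leqP. Qed.

Lemma rv_ge F S f e : admissible F S f e -> #|add (del S f) e| <= repair_value F S f.
Proof. by move=> H; apply: (leq_bigmax_cond (F := fun e => #|add (del S f) e|)). Qed.

Lemma rob_le F S f : robust_value F S <= repair_value F S f.
Proof.
rewrite /robust_value; have : f \in index_enum (option T) by rewrite mem_index_enum.
elim: (index_enum _) => // a l IH; rewrite inE big_cons => /orP [/eqP <-|fl].
  exact: geq_minl.
exact: leq_trans (geq_minr _ _) (IH fl).
Qed.

Lemma rob_ge F S k : k <= #|T|.+1 -> (forall f, k <= repair_value F S f) ->
  k <= robust_value F S.
Proof.
move=> Hk H; rewrite /robust_value; apply: (big_ind (fun v => k <= v)) => //.
by move=> x y hx hy; rewrite leq_min hx hy.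
Qed.

Lemma setD1_id (S : {set T}) x : x \notin S -> S :\ x = S.
Proof. by move=> H; apply/setP => y; rewrite !inE; case: eqP => // ->; rewrite (negbTE H). Qed.

Lemma card_add (X : {set T}) e : #|add X e| <= #|X| + 1.
Proof. case: e => [x|] /=; last lia. rewrite cardsU1; case: (x \notin X); lia. Qed.

Lemma card_del S f : #|S| - 1 <= #|del S f| <= #|S|.
Proof. case: f => [x|] /=; last lia. rewrite (cardsD1 x S); case: (x \in S); lia. Qed.

Lemma adm_in F S f e : admissible F S f e -> add (del S f) e \in F.
Proof. by case/andP. Qed.

Lemma adm_none F S f : down_closed F -> S \in F -> admissible F S f None.
Proof.
move=> dc SF; rewrite /admissible /=; apply: (dc S) => //.
case: f => [x|] /=; [exact: subsetDl | exact: subxx].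
Qed.

Lemma rv_lem F S f m : (forall S', S' \in F -> #|S'| <= m) -> repair_value F S f <= m.
Proof. by move=> H; apply: rv_le => e /adm_in /H. Qed.

Lemma maxcard_lb F S : down_closed F -> is_max_card F S -> #|S| - 1 <= robust_value F S.
Proof.
move=> dc [SF _]; apply: rob_ge; first by have := max_card S; lia.
move=> f; apply: leq_trans _ (rv_ge (adm_none f dc SF)) => /=.
by case/andP: (card_del S f).
Qed.

Lemma repairable_lb F S : down_closed F -> is_max_card F S -> repairable F S ->
  #|S| <= robust_value F S.
Proof.
move=> dc [SF _] [_ R]; apply: rob_ge; first by have := max_card S; lia.
case=> [x|]; last by apply: (rv_ge (adm_none None dc SF)).
case xS: (x \in S); last first.
  have := rv_ge (adm_none (Some x) dc SF) => /=.
  by rewrite setD1_id // xS.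
have [e eS eF] := R x xS.
have adm : admissible F S (Some x) (Some e).
  rewrite /admissible /= setUC -/(e |: (S :\ x)) eF andbT.
  rewrite inE in eS; rewrite eS /=; apply/negP => /eqP [] ex.
  by rewrite -ex xS in eS.
apply: leq_trans _ (rv_ge adm) => /=.
rewrite inE in eS; rewrite cardsU1 !inE (negbTE eS) andbF /= (cardsD1 x S) xS; lia.
Qed.

End H.

Theorem mainTheorem1 (T : finType) (F : {set {set T}}) :
  F != set0 -> down_closed F ->
  (exists S : {set T}, is_max_card F S /\ optimal_first_stage F S) /\
  (forall S : {set T}, is_max_card F S -> repairable F S -> optimal_first_stage F S).
Proof.
move=> Fn0 dc.
have part2 : forall S : {set T}, is_max_card F S -> repairable F S -> optimal_first_stage F S.
  move=> S mS rS; split; first by case: mS.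
  move=> S' S'F; apply: leq_trans (repairable_lb dc mS rS).
  apply: leq_trans (rob_le _ _ None) _; apply: rv_lem; by case: mS.
split=> //.
have [S1 S1F] : exists S1, S1 \in F by case/set0Pn: Fn0 => S1 H; exists S1.
set S0 := [arg max_(S > S1 in F) #|S|].
have mS0 : is_max_card F S0.
  by rewrite /S0; case: arg_maxnP => // S SF H; split.
case: (classic (exists S, is_max_card F S /\ repairable F S)) => [[S [mS rS]]|nR].
  by exists S; split => //; apply: part2.
exists S0; split => //; split; first by case: mS0.
have nR0 : forall S, is_max_card F S -> exists2 x, x \in S &
    forall e, e \in ~: S -> (S :\ x) :|: [set e] \notin F.
  move=> S mS; apply: NNPP => H; apply: nR; exists S; split => //.
  split; first by case: mS.
  move=> f fS; apply: NNPP => H2; apply: H; exists f => // e eS.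
  by apply/negP => eF; apply: H2; exists e.
have lb := maxcard_lb dc mS0.
move=> S' S'F; apply: leq_trans lb.
case: mS0 => [S0F max0].
case: (#|S'| =P #|S0|) => [eq|neq].
  have mS' : is_max_card F S' by split => // X XF; rewrite eq; exact: max0.
  have [x xS' nE] := nR0 S' mS'.
  apply: leq_trans (rob_le _ _ (Some x)) _; apply: rv_le => -[y|] /=; last first.
    by move=> _; rewrite -eq (cardsD1 x S') xS'; lia.
  case/andP=> /andP [yS' xy] yF; exfalso.
  have := nE y; rewrite inE yS' setUC => /(_ isT); by rewrite yF.
have lt : #|S'| < #|S0| by have := max0 S' S'F; lia.
case: (set_0Vmem S') => [S'0|[x xS']].
  case: (leqP 2 #|S0|) => h2.
    apply: leq_trans (rob_le _ _ None) _; apply: rv_le => e _.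
    apply: leq_trans (card_add _ _) _; rewrite /= S'0 cards0; lia.
  have [x xS0 nE] := nR0 S0 (conj S0F max0).
  have S0x : S0 :\ x = set0.
    apply/eqP; rewrite -cards_eq0; have := cardsD1 x S0; rewrite xS0; lia.
  apply: leq_trans (rob_le _ _ (Some x)) _; apply: rv_le => -[y|] /=; last first.
    by move=> _; have := card_del S' (Some x); rewrite S'0 cards0 /=; lia.
  case/andP=> /andP [_ xy] yF; exfalso.
  have := nE y; rewrite S0x set0U.
  have -> : y \in ~: S0.
    rewrite inE; apply/negP => yS0.
    have : y \in S0 :\ x by rewrite !inE yS0 andbT eq_sym; apply/negP => /eqP ex; move: xy; rewrite ex eqxx.
    by rewrite S0x inE.
  move=> /(_ isT); rewrite S'0 /= in yF; have E : set0 :\ x = set0 :> {set T} by apply/setP => z; rewrite !inE andbF.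
  by rewrite E setU0 in yF; rewrite yF.
apply: leq_trans (rob_le _ _ (Some x)) _; apply: rv_le => e _.
apply: leq_trans (card_add _ _) _; rewrite /= (cardsD1 x S') xS' in lt *; lia.
Qed.
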